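(* Let $r_0\ge r_1\ge0$ be integers and $k\ge 2r_0+1$. Let $T$ be a triangle, $e\in\Delta_1(T)$ an edge with a fixed unit normal $n_e$. Then the space $\mathbb P_k\big(D(e,r_1)\setminus D(\Delta_0(e),r_0)\big)$ is uniquely determined by the values $$\int_e\frac{\partial^\beta u}{\partial n_e^\beta}\lambda_e^{\alpha_e}\,\mathrm ds,\qquad \alpha_e\in\mathbb T^1_{k-2(r_0+1)+\beta},\ \beta=0,1,\dots,r_1.$$
   Context: $T$ has vertices $\texttt v_0,\texttt v_1,\texttt v_2$ and barycentric coordinates $\lambda_0,\lambda_1,\lambda_2$. $\mathbb N$ includes $0$; $\mathbb T^d_j=\{\alpha\in\mathbb N^{d+1}:\sum_i\alpha_i=j\}$ (empty if $j<0$); $\lambda^\alpha=\prod_i\lambda_i^{\alpha_i}$; for $S\subseteq\mathbb T^2_k$, $\mathbb P_k(S)=\mathrm{span}\{\lambda^\alpha:\alpha\in S\}$. A face $f$ (vertex or edge) is identified with its vertex index set, $f^*$ is the complement in $\{0,1,2\}$, $D(f,r)=\{\alpha\in\mathbb T^2_k:\sum_{i\in f^*}\alpha_i\le r\}$, and $D(\Delta_0(e),r_0)$ is the union of $D(\texttt v,r_0)$ over the two vertices $\texttt v$ of $e$. If $e$ has vertices $\texttt v_{e(0)},\texttt v_{e(1)}$, then for $\alpha_e=(a,b)$, $\lambda_e^{\alpha_e}=\lambda_{e(0)}^a\lambda_{e(1)}^b$. ''Uniquely determined'' means the linear map from the space to the listed values is a bijection. *)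

(* Defs.v *)
From Stdlib Require Import Reals.
From Coquelicot Require Import Coquelicot.
Open Scope R_scope.

Definition pt := (R * R)%type.
Definition psub (a b : pt) : pt := (fst a - fst b, snd a - snd b).
Definition det2 (a b : pt) : R := fst a * snd b - snd a * fst b.

(* The triangle T has vertices v 0, v 1, v 2 (only indices 0,1,2 are used). *)
Definition nondegenerate (v : nat -> pt) : Prop :=
  det2 (psub (v 1%nat) (v 0%nat)) (psub (v 2%nat) (v 0%nat)) <> 0.

(* barycentric coordinate lambda_l (l = 0,1,2): ratio of signed areas *)
Definition bary (v : nat -> pt) (l : nat) (x : pt) : R :=
  det2 (psub (v ((l + 1) mod 3)%nat) x) (psub (v ((l + 2) mod 3)%nat) x) /
  det2 (psub (v ((l + 1) mod 3)%nat) (v l)) (psub (v ((l + 2) mod 3)%nat) (v l)).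

(* multi-indices alpha in N^3, alpha = (alpha_0, alpha_1, alpha_2) *)
Definition tri (a0 a1 a2 : nat) : nat -> nat :=
  fun l => match l with 0%nat => a0 | 1%nat => a1 | _ => a2 end.

Definition bmono (v : nat -> pt) (al : nat -> nat) (x : pt) : R :=
  bary v 0 x ^ al 0%nat * bary v 1 x ^ al 1%nat * bary v 2 x ^ al 2%nat.

(* a face f is given by its vertex index set (a boolean predicate on {0,1,2});
   D(f,r) = { alpha in T^2_k : sum_{i in f^*} alpha_i <= r }  (the T^2_k part
   is imposed separately in the span below) *)
Definition inD (f : nat -> bool) (r : nat) (al : nat -> nat) : Prop :=
  ((if f 0%nat then 0 else al 0%nat) + (if f 1%nat then 0 else al 1%nat)
   + (if f 2%nat then 0 else al 2%nat) <= r)%nat.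

Definition vface (i : nat) : nat -> bool := fun l => Nat.eqb l i.
Definition eface (i j : nat) : nat -> bool := fun l => orb (Nat.eqb l i) (Nat.eqb l j).

Definition Sset (i j r0 r1 : nat) (al : nat -> nat) : Prop :=
  inD (eface i j) r1 al /\ ~ (inD (vface i) r0 al \/ inD (vface j) r0 al).

(* P_k(S) = span{ lambda^alpha : alpha in S, alpha in T^2_k } *)
Definition inPk (v : nat -> pt) (k : nat) (S : (nat -> nat) -> Prop) (u : pt -> R) : Prop :=
  exists c : nat -> nat -> nat -> R,
    (forall a0 a1 a2, (a0 + a1 + a2 = k)%nat -> ~ S (tri a0 a1 a2) -> c a0 a1 a2 = 0) /\
    forall x, u x =
      sum_f_R0 (fun a0 => sum_f_R0 (fun a1 => sum_f_R0 (fun a2 =>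
        if Nat.eqb (a0 + a1 + a2) k then c a0 a1 a2 * bmono v (tri a0 a1 a2) x else 0)
        k) k) k.

Definition unit_normal (v : nat -> pt) (i j : nat) (n : pt) : Prop :=
  let d := psub (v j) (v i) in
  fst n * fst d + snd n * snd d = 0 /\ fst n ^ 2 + snd n ^ 2 = 1.

Definition epar (v : nat -> pt) (i j : nat) (t : R) : pt :=
  (fst (v i) + t * (fst (v j) - fst (v i)), snd (v i) + t * (snd (v j) - snd (v i))).

Definition elen (v : nat -> pt) (i j : nat) : R :=
  sqrt ((fst (v j) - fst (v i)) ^ 2 + (snd (v j) - snd (v i)) ^ 2).

Definition dnormal (u : pt -> R) (n : pt) (beta : nat) (x : pt) : R :=
  Derive_n (fun s => u (fst x + s * fst n, snd x + s * snd n)) beta 0.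

Definition dof (v : nat -> pt) (i j : nat) (n : pt) (u : pt -> R)
    (beta a b : nat) : R :=
  elen v i j * RInt (fun t => dnormal u n beta (epar v i j t)
                       * bary v i (epar v i j t) ^ a * bary v j (epar v i j t) ^ b) 0 1.

(* Main.v *)
Require Import Defs.
From Stdlib Require Import Reals Lra Lia FunctionalExtensionality.
From Coquelicot Require Import Coquelicot.

Local Open Scope R_scope.

Lemma bary_line v m x n s :
  bary v m (fst x + s * fst n, snd x + s * snd n) = bary v m x + s * (bary v m n - bary v m (0,0)).
Proof. unfold bary, det2, psub; simpl; unfold Rdiv; ring. Qed.

Lemma nondeg_cases v : nondegenerate v ->
  det2 (psub (v 1%nat) (v 0%nat)) (psub (v 2%nat) (v 0%nat)) <> 0 /\
  det2 (psub (v 2%nat) (v 1%nat)) (psub (v 0%nat) (v 1%nat)) <> 0 /\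
  det2 (psub (v 0%nat) (v 2%nat)) (psub (v 1%nat) (v 2%nat)) <> 0.
Proof.
unfold nondegenerate, det2, psub; simpl; intros H.
split; [exact H|split; intro E; apply H; lra].
Qed.

Lemma bary_epar v i j t m : nondegenerate v -> (i < 3)%nat -> (j < 3)%nat -> i <> j -> (m < 3)%nat ->
  bary v m (epar v i j t) = if Nat.eqb m i then 1 - t else if Nat.eqb m j then t else 0.
Proof.
intros H Hi Hj Hij Hm. destruct (nondeg_cases v H) as [D0 [D1 D2]].
unfold bary, epar, det2, psub in *; simpl in *.
destruct i as [|[|[|i]]]; try lia; destruct j as [|[|[|j]]]; try lia;
destruct m as [|[|[|m]]]; try lia; simpl; field; auto.
Qed.

Lemma elen_pos v i j : nondegenerate v -> (i < 3)%nat -> (j < 3)%nat -> i <> j -> 0 < elen v i j.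
Proof.
intros H Hi Hj Hij. unfold elen. apply sqrt_lt_R0.
unfold nondegenerate, det2, psub in H; simpl in H.
destruct (Req_dec (fst (v j) - fst (v i)) 0) as [E1|E1];
[destruct (Req_dec (snd (v j) - snd (v i)) 0) as [E2|E2]|].
- exfalso; apply H.
  assert (F1 : fst (v j) = fst (v i)) by lra. assert (F2 : snd (v j) = snd (v i)) by lra.
  destruct i as [|[|[|i]]]; try lia; destruct j as [|[|[|j]]]; try lia; rewrite F1, F2; ring.
- pose proof (pow2_gt_0 _ E2); pose proof (pow2_ge_0 (fst (v j) - fst (v i))); lra.
- pose proof (pow2_gt_0 _ E1); pose proof (pow2_ge_0 (snd (v j) - snd (v i))); lra.
Qed.

Lemma perp_zero ex ey n1 n2 : n1 * ex + n2 * ey = 0 -> n1 ^ 2 + n2 ^ 2 = 1 ->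
  ex * n2 - ey * n1 = 0 -> ex = 0 /\ ey = 0.
Proof.
intros H1 H2 H3. split.
- replace ex with (ex * (n1 ^ 2 + n2 ^ 2)) by (rewrite H2; ring).
  replace (ex * (n1 ^ 2 + n2 ^ 2)) with (n1 * (n1 * ex + n2 * ey) + n2 * (ex * n2 - ey * n1)) by ring.
  rewrite H1, H3; ring.
- replace ey with (ey * (n1 ^ 2 + n2 ^ 2)) by (rewrite H2; ring).
  replace (ey * (n1 ^ 2 + n2 ^ 2)) with (n2 * (n1 * ex + n2 * ey) - n1 * (ex * n2 - ey * n1)) by ring.
  rewrite H1, H3; ring.
Qed.

Lemma dl_nonzero v i j l n : nondegenerate v -> (i < 3)%nat -> (j < 3)%nat -> i <> j ->
  (l < 3)%nat -> l <> i -> l <> j -> unit_normal v i j n ->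
  bary v l n - bary v l (0,0) <> 0.
Proof.
intros H Hi Hj Hij Hl Hli Hlj [Hn1 Hn2].
destruct (nondeg_cases v H) as [D0 [D1 D2]].
unfold nondegenerate, bary, det2, psub in *; simpl in *.
destruct i as [|[|[|i]]]; try lia; destruct j as [|[|[|j]]]; try lia;
destruct l as [|[|[|l]]]; try lia; simpl in *; intro E;
match type of E with ?a / ?d - ?b / ?d = 0 =>
  assert (E' : a - b = 0) by (apply (Rmult_eq_reg_r (/ d)); [unfold Rdiv in E; lra | apply Rinv_neq_0_compat; auto])
end; clear E;
match type of Hn1 with fst n * ?ex + snd n * ?ey = 0 =>
  destruct (perp_zero ex ey (fst n) (snd n) Hn1 Hn2 ltac:(lra)) as [F1 F2]
end;
apply H; nra.
Qed.

Local Close Scope R_scope.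

From HB Require Import structures.
From mathcomp Require Import all_boot all_algebra.
From mathcomp Require Import Rstruct.
From mathcomp Require Import ring zify.
Import GRing.Theory Num.Theory.
Local Open Scope ring_scope.

Lemma RInt_pos_point (f : R -> R) t0 :
  (forall x, continuous f x) -> (forall x, Rlt R0 x /\ Rlt x R1 -> Rle R0 (f x)) ->
  Rlt R0 t0 /\ Rlt t0 R1 -> Rlt R0 (f t0) -> Rlt R0 (RInt f R0 R1).
Proof.
Local Open Scope R_scope.
move=> Hc Hpos Ht0 Hf0.
have Hcp : continuity_pt f t0 by apply/continuity_pt_filterlim; apply: Hc.
have [del [Hdel Hd]] := Hcp (f t0 / 2) ltac:(lra).
set h := Rmin (del / 2) (Rmin (t0 / 2) ((1 - t0) / 2)).
have Hh1 : 0 < h.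
  rewrite /h; repeat apply Rmin_pos; lra.
have Hh2 : h <= del / 2 by apply Rmin_l.
have Hh3 : h <= t0 / 2 by rewrite /h; eapply Rle_trans; [apply Rmin_r|apply Rmin_l].
have Hh4 : h <= (1 - t0) / 2 by rewrite /h; eapply Rle_trans; [apply Rmin_r|apply Rmin_r].
have Hex : forall a b, ex_RInt f a b.
  move=> a b; apply: ex_RInt_continuous => z _; apply: Hc.
rewrite -(RInt_Chasles f 0 (t0 - h) 1) ?Hex //.
rewrite -(RInt_Chasles f (t0 - h) (t0 + h) 1) ?Hex //.
have H1 : 0 <= RInt f 0 (t0 - h).
  apply: RInt_ge_0; [lra|apply Hex|move=> x Hx; apply Hpos; lra].
have H3 : 0 <= RInt f (t0 + h) 1.
  apply: RInt_ge_0; [lra|apply Hex|move=> x Hx; apply Hpos; lra].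
have H2 : 0 < RInt f (t0 - h) (t0 + h).
  apply: RInt_gt_0; [lra| |move=> x _; apply Hc].
  move=> x Hx.
  case: (Req_dec x t0) => [->|Hne]; first lra.
  have := Hd x.
  rewrite /D_x /no_cond /R_dist /=.
  have Hab : Rabs (x - t0) < del by apply Rabs_def1; lra.
  move=> H; have {}H := H (conj (conj I (not_eq_sym Hne)) Hab).
  have := Rabs_def2 _ _ H; lra.
rewrite /plus /=. lra.
Local Close Scope R_scope.
Qed.


Lemma is_derive_poly (p : {poly R}) x : is_derive (fun s => p.[s]) x (p^`()).[x].
Proof.
elim/poly_ind: p x => [|p c IH] x.
  rewrite deriv0 horner0.
  have H := is_derive_const (0:R) x.
  apply: (is_derive_ext (fun _ : R => 0 : R)) => [t|]; first by rewrite horner0.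
  exact: H.
apply: (is_derive_ext (fun t : R => p.[t] * t + c : R)) => [t|]; first by rewrite hornerMXaddC.
rewrite derivMXaddC hornerD hornerM hornerX.
have H := is_derive_plus _ _ x _ _ (is_derive_mult _ _ x _ _ (IH x) (is_derive_id x) (fun a b => Rmult_comm a b)) (is_derive_const c x).
move: H; rewrite /plus /mult /one /zero /=.
have -> : (p.[x] + (p^`()).[x] * x = Rplus (Rplus (Rmult (p^`()).[x] x) (Rmult p.[x] R1)) R0)%R.
  rewrite RplusE !RmultE. rewrite mulr1 addr0 addrC //.
by [].
Qed.

Lemma continuous_poly (p : {poly R}) x : continuous (fun s => p.[s]) x.
Proof. apply: ex_derive_continuous; eexists; apply: is_derive_poly. Qed.

Lemma Derive_n_poly (p : {poly R}) n : Derive_n (fun s => p.[s]) n = fun s => (p^`(n)).[s].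
Proof.
elim: n => [|n IH].
  by apply: functional_extensionality => s; rewrite ?derivn0.
apply: functional_extensionality => s.
change (Derive (Derive_n (fun s => p.[s]) n) s = (p^`(n.+1)).[s]).
rewrite IH derivnS.
apply: is_derive_unique. exact: is_derive_poly.
Qed.

Lemma Derive_n_poly0 (p : {poly R}) n : Derive_n (fun s => p.[s]) n 0 = p`_n * (n`!)%:R.
Proof.
by rewrite Derive_n_poly horner_coef0 coef_derivn addn0 ffactnn mulr_natr.
Qed.

Lemma poly_zero_01 (q : {poly R}) : (forall t : R, Rlt R0 t /\ Rlt t R1 -> q.[t] = 0) -> q = 0.
Proof.
move=> H; apply/eqP; apply/negPn/negP => qn0.
set rs := [seq ((i.+2)%:R : R)^-1 | i <- iota 0 (size q)].
have := max_poly_roots qn0.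
have Hall : all (root q) rs.
  apply/allP => x /mapP [i _ ->]. apply/rootP; apply: H.
  have Hp : Rlt R0 ((i.+2)%:R) by rewrite -INRE; apply lt_0_INR; apply/ltP.
  have Hp1 : Rlt R1 ((i.+2)%:R) by rewrite -INRE; apply (lt_INR 1); apply/ltP.
  split. rewrite -RinvE. by apply: Rinv_0_lt_compat.
  rewrite -RinvE. have H1 : Rlt (IZR 1) (i.+2%:R) by lra.
  have H2 : Rlt R0 (Rmult (IZR 1) (i.+2%:R)) by lra.
  have := Rinv_lt_contravar (IZR 1) _ H2 H1. rewrite Rinv_1. lra.
have Hu : uniq rs.
  rewrite map_inj_uniq ?iota_uniq // => a b /invr_inj /eqP. rewrite eqr_nat => /eqP [] //.
by move=> /(_ rs Hall Hu); rewrite size_map size_iota ltnn.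
Qed.

Definition Iint (p : {poly R}) : R := RInt (fun t => p.[t]) 0 1.

Lemma key_pos (Q : {poly R}) s : Iint (((1 - 'X) * 'X) ^+ s * Q ^+ 2) = 0 -> Q = 0.
Proof.
move=> H0; apply: poly_zero_01 => t Ht.
have Hw : Rlt R0 (((1 - 'X) * 'X) ^+ s).[t].
  rewrite horner_exp hornerM hornerD hornerN hornerX hornerC -RpowE.
  apply: pow_lt. rewrite -RmultE -RplusE -RoppE -R1E. case: Ht => ? ?. nra.
apply/eqP; apply/negPn/negP => Hq.
have Hq2 : Rlt R0 (Q.[t] ^+ 2).
  rewrite -RpowE. have : Q.[t] <> R0 by move=> E; rewrite E eqxx in Hq.
  move=> ?. apply: pow2_gt_0. done.
have := RInt_pos_point (fun x => (((1 - 'X) * 'X) ^+ s * Q ^+ 2).[x]) t (continuous_poly _) _ Ht _.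
rewrite -/(Iint _) H0 => /(_ _ _) H. suff: Rlt R0 R0 by lra.
apply: H.
- move=> x Hx. rewrite hornerM horner_exp. rewrite -!RpowE -RmultE.
  apply: Rmult_le_pos. apply: pow_le. rewrite hornerM hornerD hornerN hornerX hornerC.
  rewrite -RmultE -RplusE -RoppE -R1E. case: Hx => ? ?. nra.
  rewrite horner_exp -RpowE -Rsqr_pow2; apply: Rle_0_sqr.
- rewrite hornerM -RmultE. apply: Rmult_lt_0_compat; first done. by rewrite horner_exp.
Qed.

Lemma ex_RInt_poly (p : {poly R}) a b : ex_RInt (fun t => p.[t]) a b.
Proof. apply: ex_RInt_continuous => z _; apply: continuous_poly. Qed.

Lemma Iint_add p q : Iint (p + q) = Iint p + Iint q.
Proof.
rewrite /Iint; transitivity (plus (RInt (fun t => p.[t]) 0 1) (RInt (fun t => q.[t]) 0 1)); last by [].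
rewrite -RInt_plus; [|exact: ex_RInt_poly|exact: ex_RInt_poly].
by apply: RInt_ext => t _; rewrite hornerD.
Qed.

Lemma Iint_polyC c p : Iint (c%:P * p) = c * Iint p.
Proof.
rewrite /Iint; transitivity (scal c (RInt (fun t => p.[t]) 0 1)); last by [].
rewrite -RInt_scal; last exact: ex_RInt_poly.
by apply: RInt_ext => t _; rewrite hornerM hornerC.
Qed.

Lemma Iint0 : Iint 0 = 0.
Proof.
rewrite /Iint (RInt_ext _ (fun _ => (0:R))); last by move=> t _; rewrite horner0.
by rewrite RInt_const /scal /= /mult /= RmultE mulr0.
Qed.

Lemma Iint_sum (I : Type) (r : seq I) (P : pred I) (F : I -> {poly R}) :
  Iint (\sum_(x <- r | P x) F x) = \sum_(x <- r | P x) Iint (F x).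
Proof. exact: (big_morph Iint Iint_add Iint0). Qed.

Lemma Iint_sub p q : Iint (p - q) = Iint p - Iint q.
Proof.
have -> : p - q = p + (-1)%:P * q by rewrite polyCN mulN1r.
by rewrite Iint_add Iint_polyC mulN1r.
Qed.


Lemma coef_Xfactor (D : R) (e b : nat) (G : {poly {poly R}}) :
  (((0 : {poly R})%:P + D%:P%:P * 'X) ^+ e * G)`_b =
  if (b < e)%N then 0 else (D ^+ e)%:P * G`_(b - e).
Proof.
rewrite add0r exprMn -!rmorphXn /= -mulrA coefCM coefXnM.
by case: ifP => _; rewrite ?mulr0.
Qed.

Section Core.
Variables (r0 r1 k : nat) (v : nat -> pt) (i j : nat) (n : pt).

Definition T3 := ('I_k.+1 * 'I_k.+1 * 'I_k.+1)%type.
Definition al (x : T3) : nat -> nat := tri x.1.1 x.1.2 x.2.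
Definition sumE (f : nat -> bool) (a : nat -> nat) : nat :=
  ((if f 0%N then 0 else a 0%N) + (if f 1%N then 0 else a 1%N) + (if f 2%N then 0 else a 2%N))%N.
Definition inI (x : T3) : bool :=
  [&& (x.1.1 + x.1.2 + x.2 == k)%N, (sumE (eface i j) (al x) <= r1)%N,
      (r0 < sumE (vface i) (al x))%N & (r0 < sumE (vface j) (al x))%N].
Definition bet x := sumE (eface i j) (al x).
Definition aa x := (sumE (vface j) (al x) - r0.+1)%N.
Definition bb x := (sumE (vface i) (al x) - r0.+1)%N.
Definition ll := (3 - (i + j))%N.

Definition dd (m : nat) : R := (bary v m n - bary v m (R0, R0))%R.
Definition Lp (m : nat) : {poly R} := if m == i then 1 - 'X else if m == j then 'X else 0.
Definition Fm (m e : nat) : {poly {poly R}} := ((Lp m)%:P + (dd m)%:P%:P * 'X) ^+ e.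
Definition Mon (x : T3) : {poly {poly R}} := \prod_(m < 3) Fm m (al x m).

Hypotheses (Hi : (i < 3)%N) (Hj : (j < 3)%N) (Hij : i <> j).

Lemma Fm0 m e : (Fm m e)`_0 = Lp m ^+ e.
Proof.
rewrite -horner_coef0 /Fm horner_exp hornerD hornerC hornerM hornerX mulr0 addr0 //.
Qed.

Lemma Mon_split x : Mon x = Fm ll (al x ll) * (Fm i (al x i) * Fm j (al x j)).
Proof.
rewrite /Mon !big_ord_recr big_ord0 /= mul1r /ll.
case: i Hi Hij => [|[|[|?]]] // _; case: j Hj => [|[|[|?]]] // _ _ /=; ring.
Qed.

Lemma Lp_ll : Lp ll = 0.
Proof.
rewrite /Lp /ll.
case: i Hi Hij => [|[|[|?]]] // _; case: j Hj => [|[|[|?]]] // _ _ //.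
Qed.

Lemma bet_ll x : bet x = al x ll.
Proof.
rewrite /bet /sumE /ll /eface /=.
case: i Hi Hij => [|[|[|?]]] // _; case: j Hj => [|[|[|?]]] // _ _ //=.
all: by rewrite ?addn0 ?add0n.
Qed.

Lemma Mon_coef_lt x b : (b < bet x)%N -> (Mon x)`_b = 0.
Proof.
by move=> H; rewrite Mon_split /Fm Lp_ll coef_Xfactor -bet_ll H.
Qed.

Lemma Mon_coef_eq x : (Mon x)`_(bet x) =
  ((dd ll) ^+ bet x)%:P * ((1 - 'X) ^+ (al x i) * 'X ^+ (al x j)).
Proof.
rewrite Mon_split /Fm Lp_ll coef_Xfactor -bet_ll ltnn subnn coef0M.
rewrite -/(Fm i _) -/(Fm j _) !Fm0 /Lp eqxx.
case: eqP => [E|_]; first by case: Hij; rewrite E.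
by rewrite eqxx.
Qed.


Ltac cases_ij := case: i Hi Hij => [|[|[|?]]] // _; case: j Hj => [|[|[|?]]] // _ _.

Lemma sumE_vi x : sumE (vface i) (al x) = (al x j + al x ll)%N.
Proof. rewrite /sumE /vface /ll; cases_ij; rewrite /=; lia. Qed.

Lemma sumE_vj x : sumE (vface j) (al x) = (al x i + al x ll)%N.
Proof. rewrite /sumE /vface /ll; cases_ij; rewrite /=; lia. Qed.

Lemma sum_al x : (al x i + al x j + al x ll)%N = (x.1.1 + x.1.2 + x.2)%N.
Proof. rewrite /ll; cases_ij; rewrite /=; lia. Qed.

Hypothesis Hr : (r1 <= r0)%N.

Lemma inI_facts x : inI x ->
  [/\ (bet x <= r1)%N, al x i = (aa x + (r0.+1 - bet x))%N, al x j = (bb x + (r0.+1 - bet x))%N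
    & (aa x + bb x + 2 * (r0 + 1) = k + bet x)%N].
Proof.
case/and4P => /eqP Hs Hl Hvi Hvj.
have := sum_al x. move: Hl Hvi Hvj.
rewrite /aa /bb -/(bet x) bet_ll sumE_vi sumE_vj => *. split; lia.
Qed.

Lemma inI_inj x y : inI x -> inI y -> bet x = bet y -> bb x = bb y -> x = y.
Proof.
move=> Hx Hy Hb Hbb.
have [_ _ Hjx _] := inI_facts x Hx. have [_ _ Hjy _] := inI_facts y Hy.
have Ej : al x j = al y j by rewrite Hjx Hjy Hb Hbb.
have El : al x ll = al y ll by rewrite -!bet_ll.
have Ei : al x i = al y i.
  have := sum_al x; have := sum_al y.
  case/and4P: Hx => /eqP -> _ _ _; case/and4P: Hy => /eqP -> _ _ _. lia.
case: x y Ei Ej El {Hx Hy Hb Hbb Hjx Hjy} => [[x0 x1] x2] [[y0 y1] y2].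
rewrite /al /ll /=.
cases_ij => /= E1 E2 E3; congr (_, _, _); try congr (_, _); apply: val_inj => /=; done.
Qed.

Lemma exists_idx b0 a b : (b0 <= r1)%N -> (a + b + 2 * (r0 + 1) = k + b0)%N ->
  exists y, [/\ inI y, bet y = b0, aa y = a & bb y = b].
Proof.
move=> Hb0 Hs.
pose e (m : nat) := if m == i then (a + r0.+1 - b0)%N else if m == j then (b + r0.+1 - b0)%N else b0.
have He : forall m, (e m <= k)%N by move=> m; rewrite /e; case: (m == i); case: (m == j); lia.
exists ((inord (e 0%N), inord (e 1%N)), inord (e 2%N)).
have Hal : forall m, (m < 3)%N -> al ((inord (e 0%N), inord (e 1%N)), inord (e 2%N)) m = e m.
  by case=> [|[|[|?]]] // _; rewrite /al /= inordK // ltnS He.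
rewrite /inI /bet /aa /bb /sumE /= !inordK ?ltnS ?He //.
rewrite /e /eface /vface; cases_ij; rewrite /=; (split; [apply/and4P; split|..]); lia.
Qed.

Definition PPI (ch : T3 -> R) : {poly {poly R}} := \sum_(x : T3 | inI x) (ch x)%:P%:P * Mon x.
Definition W (b : nat) : {poly R} := ((1 - 'X) * 'X) ^+ (r0.+1 - b).
Definition Bx (x : T3) : {poly R} := (1 - 'X) ^+ (aa x) * 'X ^+ (bb x).

Lemma Mon_coef_eq' x : inI x -> (Mon x)`_(bet x) = (dd ll ^+ bet x)%:P * (W (bet x) * Bx x).
Proof.
move=> Hx; have [_ Ei Ej _] := inI_facts x Hx.
rewrite Mon_coef_eq Ei Ej /W /Bx !exprD exprMn; congr (_ * _); ring.
Qed.

Lemma PPI_coef ch b : (forall x, inI x -> (bet x < b)%N -> ch x = 0) ->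
  (PPI ch)`_b = (dd ll ^+ b)%:P * (W b * \sum_(x | inI x && (bet x == b)) (ch x)%:P * Bx x).
Proof.
move=> H0; rewrite /PPI coef_sum mulr_sumr mulr_sumr [RHS]big_mkcond [LHS]big_mkcond /=.
apply: eq_bigr => x _; case Hx: (inI x) => //=.
rewrite coefCM.
case: (ltngtP (bet x) b) => Hb /=.
- by rewrite H0 // mul0r.
- by rewrite Mon_coef_lt // mulr0.
- by rewrite -Hb Mon_coef_eq' //; ring.
Qed.

Lemma indep b (c : T3 -> R) : \sum_(x | inI x && (bet x == b)) (c x)%:P * Bx x = 0 ->
  forall x, inI x -> bet x = b -> c x = 0.
Proof.
move=> H0.
suff: forall m x, inI x -> bet x = b -> bb x = m -> c x = 0 by move=> H x Hx Hb; exact: H Hx Hb erefl.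
elim/ltn_ind => m IH x Hx Hb Hm.
have := congr1 (fun p : {poly R} => p`_(bb x)) H0; rewrite /= coef_sum coef0.
rewrite (bigD1 x) /=; last by rewrite Hx Hb eqxx.
rewrite big1 ?addr0.
  rewrite coefCM /Bx [(1 - 'X) ^+ _ * _]mulrC coefXnM ltnn subnn -horner_coef0 horner_exp hornerD hornerN hornerX hornerC.
  by rewrite subr0 expr1n mulr1.
move=> y /andP [/andP [Hy /eqP Hby] Hyx].
rewrite coefCM /Bx [(1 - 'X) ^+ _ * _]mulrC coefXnM.
case: (ltngtP (bb x) (bb y)) => Hc.
- by rewrite mulr0.
- by rewrite (IH (bb y)) ?mul0r // -Hm.
- by case/eqP: Hyx; apply: (inI_inj y x Hy Hx); rewrite ?Hby ?Hb.
Qed.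

Hypothesis Hdl : dd ll <> 0.

Lemma core_inj ch : (forall y, inI y -> Iint ((PPI ch)`_(bet y) * Bx y) = 0) ->
  forall x, inI x -> ch x = 0.
Proof.
move=> H0.
suff: forall b x, inI x -> bet x = b -> ch x = 0 by move=> H x Hx; exact: H Hx erefl.
elim/ltn_ind => b IH.
have HP : forall x, inI x -> (bet x < b)%N -> ch x = 0 by move=> x Hx Hb; exact: IH Hb x Hx erefl.
set Q := \sum_(x | inI x && (bet x == b)) (ch x)%:P * Bx x.
have HQ : forall y, inI y -> bet y = b -> Iint (W b * (Q * Bx y)) = 0.
  move=> y Hy Hb; have := H0 y Hy; rewrite Hb PPI_coef // -!mulrA Iint_polyC.
  move/eqP; rewrite mulf_eq0 => /orP [|/eqP -> //].
  by rewrite expf_eq0 => /andP [_ /eqP].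
have HQ2 : Iint (((1 - 'X) * 'X) ^+ (r0.+1 - b) * Q ^+ 2) = 0.
  rewrite expr2 mulrA {2}/Q mulr_sumr Iint_sum big1 // => y /andP [Hy /eqP Hb].
  have -> : ((1 - 'X) * 'X) ^+ (r0.+1 - b) * Q * ((ch y)%:P * Bx y) = (ch y)%:P * (W b * (Q * Bx y)) by rewrite /W; ring.
  by rewrite Iint_polyC HQ // mulr0.
have HQ0 := key_pos _ _ HQ2.
exact: indep HQ0.
Qed.

Definition V := {ffun T3 -> R^o}.
Definition Fy (ch : V) : V :=
  [ffun y => if inI y then Iint ((PPI (fun x => ch x))`_(bet y) * Bx y) else ch y].

Lemma PPI_lin (a : R) (c1 c2 : T3 -> R) :
  PPI (fun x => a * c1 x + c2 x) = a%:P%:P * PPI c1 + PPI c2.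
Proof.
rewrite /PPI mulr_sumr -big_split /=; apply: eq_bigr => x _.
by rewrite !rmorphD !rmorphM /=; ring.
Qed.

Lemma Fy_lin : linear Fy.
Proof.
move=> a c1 c2; apply/ffunP => y; rewrite !ffunE.
case: (inI y) => //.
have -> : (fun x => (a *: c1 + c2) x) = (fun x => a * c1 x + c2 x).
  by apply: functional_extensionality => x; rewrite !ffunE.
rewrite PPI_lin coefD coefCM mulrDl Iint_add -mulrA Iint_polyC //.
Qed.

HB.instance Definition _ := GRing.isLinear.Build R V V *:%R Fy Fy_lin.

Lemma Fy_inj : injective Fy.
Proof.
move=> c1 c2 E.
have E0 : Fy (c1 - c2) = 0 by rewrite linearB /= E subrr.
apply/eqP; rewrite -subr_eq0; apply/eqP/ffunP => y.
case Hy: (inI y).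
- rewrite [RHS]ffunE; apply: (core_inj (fun x => (c1 - c2) x)) => // z Hz.
  by have := congr1 (fun f : V => f z) E0; rewrite /= !ffunE Hz.
- by have := congr1 (fun f : V => f y) E0; rewrite /= !ffunE Hy => ->.
Qed.

Lemma Fy_surj (g : V) : exists ch : V, Fy ch = g.
Proof.
have H : lker (linfun Fy) == 0%VS.
  apply/lker0P => c1 c2; rewrite !lfunE; exact: Fy_inj.
exists ((linfun Fy)^-1%VF g).
have := lker0_lfunVK H g; rewrite lfunE /=. done.
Qed.

Lemma triple_sum_eq (F : nat -> nat -> nat -> R) :
  sum_f_R0 (fun a0 => sum_f_R0 (fun a1 => sum_f_R0 (fun a2 => F a0 a1 a2) k) k) k =
  \sum_(x : T3) F x.1.1 x.1.2 x.2.
Proof.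
rewrite sum_f_R0E big_mkord.
under eq_bigr do rewrite sum_f_R0E big_mkord.
under eq_bigr do under eq_bigr do rewrite sum_f_R0E big_mkord.
by rewrite pair_big /= pair_big /=.
Qed.

Lemma inI_S (x : T3) : (x.1.1 + x.1.2 + x.2)%N = k -> (inI x <-> Sset i j r0 r1 (al x)).
Proof.
move=> Hs; rewrite /inI /Sset /inD /sumE Hs eqxx /=.
split.
- case/and3P => /leP H1 /ltP H2 /ltP H3; split => //; case => H; lia.
- case=> /leP H1 H2; apply/and3P; split => //; apply/ltP.
  + apply/Nat.nle_gt => H; case: H2; by left.
  + apply/Nat.nle_gt => H; case: H2; by right.
Qed.

Definition chat (c : nat -> nat -> nat -> R) : T3 -> R := fun x => c x.1.1 x.1.2 x.2.

Hypothesis Hnd : Defs.nondegenerate v.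

Lemma eqb_eqn (a b : nat) : Nat.eqb a b = (a == b).
Proof. by case: (PeanoNat.Nat.eqb_spec a b); case: eqP. Qed.

Lemma bary_line_Lp m t s : (m < 3)%N ->
  bary v m (fst (epar v i j t) + s * fst n, snd (epar v i j t) + s * snd n)%R = (Lp m).[t] + dd m * s.
Proof.
move=> Hm; rewrite bary_line bary_epar //; [|exact/ltP|exact/ltP|exact/ltP].
rewrite /Lp /dd !eqb_eqn.
case: (m == i); first by rewrite hornerD hornerN hornerX hornerC -R1E RplusE RmultE mulrC.
case: (m == j); first by rewrite hornerX RplusE RmultE mulrC.
by rewrite horner0 RplusE RmultE mulrC -R0E.
Qed.

Lemma Mon_eval x t s : (map_poly (horner_eval t) (Mon x)).[s] = \prod_(m < 3) ((Lp m).[t] + dd m * s) ^+ (al x m).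
Proof.
rewrite /Mon rmorph_prod horner_prod; apply: eq_bigr => m _.
rewrite /Fm rmorphXn rmorphD rmorphM /= !map_polyC map_polyX /= !horner_evalE hornerC.
by rewrite horner_exp hornerD hornerM hornerX !hornerC.
Qed.

Lemma line_eval (c : nat -> nat -> nat -> R) (u : pt -> R) :
  (forall a0 a1 a2, (a0 + a1 + a2 = k)%nat -> ~ Sset i j r0 r1 (tri a0 a1 a2) -> c a0 a1 a2 = 0) ->
  (forall x, u x =
      sum_f_R0 (fun a0 => sum_f_R0 (fun a1 => sum_f_R0 (fun a2 =>
        if Nat.eqb (a0 + a1 + a2) k then Rmult (c a0 a1 a2) (bmono v (tri a0 a1 a2) x) else R0)
        k) k) k) ->
  forall t s, u (fst (epar v i j t) + s * fst n, snd (epar v i j t) + s * snd n)%R =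
    (map_poly (horner_eval t) (PPI (chat c))).[s].
Proof.
move=> Hc Hu t s; rewrite Hu triple_sum_eq.
rewrite /PPI rmorph_sum horner_sum [RHS]big_mkcond; apply: eq_bigr => x _.
rewrite eqb_eqn.
case Hs: (_ == k).
- case HI: (inI x).
  + rewrite rmorphM /= map_polyC /= hornerCM horner_evalE hornerC Mon_eval /chat.
    rewrite /bmono !big_ord_recr big_ord0 /= mul1r -!RpowE RmultE.
    by rewrite !bary_line_Lp.
  + rewrite Hc ?RmultE ?mul0r //; first exact/eqP.
    by move/(inI_S x (eqP Hs)); rewrite HI.
- case HI: (inI x) => //.
  by case/and4P: HI => HH _ _ _; rewrite HH in Hs.
Qed.

Lemma dnormal_eval c u :
  (forall a0 a1 a2, (a0 + a1 + a2 = k)%nat -> ~ Sset i j r0 r1 (tri a0 a1 a2) -> c a0 a1 a2 = 0) ->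
  (forall x, u x =
      sum_f_R0 (fun a0 => sum_f_R0 (fun a1 => sum_f_R0 (fun a2 =>
        if Nat.eqb (a0 + a1 + a2) k then Rmult (c a0 a1 a2) (bmono v (tri a0 a1 a2) x) else R0)
        k) k) k) ->
  forall t b, dnormal u n b (epar v i j t) = ((PPI (chat c))`_b).[t] * (b`!)%:R.
Proof.
move=> Hc Hu t b; rewrite /dnormal.
rewrite (Derive_n_ext _ (fun s => (map_poly (horner_eval t) (PPI (chat c))).[s])); last first.
  by move=> s; apply: line_eval.
by rewrite Derive_n_poly0 coef_map /= horner_evalE.
Qed.

Lemma dof_eval c u :
  (forall a0 a1 a2, (a0 + a1 + a2 = k)%nat -> ~ Sset i j r0 r1 (tri a0 a1 a2) -> c a0 a1 a2 = 0) ->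
  (forall x, u x =
      sum_f_R0 (fun a0 => sum_f_R0 (fun a1 => sum_f_R0 (fun a2 =>
        if Nat.eqb (a0 + a1 + a2) k then Rmult (c a0 a1 a2) (bmono v (tri a0 a1 a2) x) else R0)
        k) k) k) ->
  forall b a b', dof v i j n u b a b' =
    elen v i j * ((b`!)%:R * Iint ((PPI (chat c))`_b * ((1 - 'X) ^+ a * 'X ^+ b'))).
Proof.
move=> Hc Hu b a b'; rewrite /dof /Iint RmultE; congr (_ * _).
transitivity (RInt (fun t => scal ((b`!)%:R : R) (((PPI (chat c))`_b * ((1 - 'X) ^+ a * 'X ^+ b')).[t])) 0 1).
  apply: RInt_ext => t _.
  have Hi' : (i < 3)%coq_nat by apply/ltP.
  have Hj' : (j < 3)%coq_nat by apply/ltP.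
  rewrite (dnormal_eval _ _ Hc Hu) !bary_epar //.
  rewrite !eqb_eqn eqxx.
  case: eqP => [E|_]; first by case: Hij.
  rewrite eqxx /scal /= /mult /= !RpowE !RmultE !RminusE ?R1E.
  rewrite !hornerM !horner_exp hornerD hornerN hornerX hornerC; ring.
by rewrite RInt_scal //; exact: ex_RInt_poly.
Qed.

Lemma PPI_sub (c1 c2 : T3 -> R) : PPI (fun x => c1 x - c2 x) = PPI c1 - PPI c2.
Proof.
rewrite /PPI -sumrB; apply: eq_bigr => x _.
by rewrite !rmorphB /= mulrBl.
Qed.

Lemma fact_neq0 b : ((b`!)%:R : R) != 0.
Proof. by rewrite pnatr_eq0 -lt0n fact_gt0. Qed.

Lemma elen_neq0 : elen v i j != 0.
Proof.
apply/eqP => E. have := elen_pos v i j Hnd (elimT ltP Hi) (elimT ltP Hj) Hij.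
rewrite E => H; exact: (Rlt_irrefl _ H).
Qed.

Lemma main_core :
  (forall u w : pt -> R,
     inPk v k (Sset i j r0 r1) u -> inPk v k (Sset i j r0 r1) w ->
     (forall beta a b, (beta <= r1)%coq_nat -> (a + b + 2 * (r0 + 1) = k + beta)%coq_nat ->
        dof v i j n u beta a b = dof v i j n w beta a b) ->
     forall x, u x = w x) /\
  (forall g : nat -> nat -> nat -> R,
     exists u : pt -> R, inPk v k (Sset i j r0 r1) u /\
       forall beta a b, (beta <= r1)%coq_nat -> (a + b + 2 * (r0 + 1) = k + beta)%coq_nat ->
         dof v i j n u beta a b = g beta a b).
Proof.
split.
- move=> u w [cu [Hcu Hu]] [cw [Hcw Hw]] Hdof.
  have Hz : forall x, inI x -> chat cu x - chat cw x = 0.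
    apply: (core_inj (fun x => chat cu x - chat cw x)) => y Hy.
    have [Hb1 _ _ Hsum] := inI_facts y Hy.
    have Hb1' : (bet y <= r1)%coq_nat by apply/leP.
    have := Hdof (bet y) (aa y) (bb y) Hb1' Hsum.
    rewrite (dof_eval _ _ Hcu Hu) (dof_eval _ _ Hcw Hw) => /(mulfI elen_neq0) /(mulfI (fact_neq0 _)) E.
    by rewrite PPI_sub coefB mulrBl Iint_sub /Bx E subrr.
  move=> x; rewrite Hu Hw !triple_sum_eq; apply: eq_bigr => y _.
  rewrite eqb_eqn; case Hs: (_ == k) => //.
  case HI: (inI y).
  + by have := Hz y HI; rewrite /chat => /eqP; rewrite subr_eq0 => /eqP ->.
  + have HS : ~ Sset i j r0 r1 (tri y.1.1 y.1.2 y.2) by move/(inI_S y (eqP Hs)); rewrite HI.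
    by rewrite Hcu ?Hcw //; apply/eqP.
- move=> g.
  pose g' : V := [ffun y => if inI y then g (bet y) (aa y) (bb y) / (elen v i j * ((bet y)`!)%:R) else 0].
  have [ch Hch] := Fy_surj g'.
  pose c (a0 a1 a2 : nat) : R := if [&& a0 <= k, a1 <= k & a2 <= k]%N then
      (if inI ((inord a0, inord a1), inord a2) then ch ((inord a0, inord a1), inord a2) else 0) else 0.
  have Hc : forall a0 a1 a2, (a0 + a1 + a2 = k)%nat -> ~ Sset i j r0 r1 (tri a0 a1 a2) -> c a0 a1 a2 = 0.
    move=> a0 a1 a2 Hs HS; rewrite /c.
    case: ifP => // /and3P [h0 h1 h2].
    case: ifP => // HI; exfalso; apply: HS.
    have := (inI_S ((inord a0, inord a1), inord a2)).
    rewrite /al /= !inordK ?ltnS // => /(_ Hs) [H _]; exact: H.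
  set u := fun x => sum_f_R0 (fun a0 => sum_f_R0 (fun a1 => sum_f_R0 (fun a2 =>
        if Nat.eqb (a0 + a1 + a2) k then Rmult (c a0 a1 a2) (bmono v (tri a0 a1 a2) x) else R0)
        k) k) k.
  have Hu : forall x, u x = sum_f_R0 (fun a0 => sum_f_R0 (fun a1 => sum_f_R0 (fun a2 =>
        if Nat.eqb (a0 + a1 + a2) k then Rmult (c a0 a1 a2) (bmono v (tri a0 a1 a2) x) else R0)
        k) k) k by [].
  exists u; split; first by exists c; split.
  move=> b a b' Hb Hs.
  have [y [Hy Eb Ea Eb']] := exists_idx b a b' (introT leP Hb) Hs.
  rewrite (dof_eval _ _ Hc Hu).
  have EP : PPI (chat c) = PPI (fun x => ch x).
    rewrite /PPI; apply: eq_bigr => x Hx; congr (_%:P%:P * _).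
    rewrite /chat /c !leq_ord /= !inord_val.
    by case: x Hx => [[x0 x1] x2] /= ->.
  have := congr1 (fun f : V => f y) Hch; rewrite /= !ffunE Hy -EP /Bx Eb Ea Eb' => ->.
  have := fact_neq0 b; have := elen_neq0.
  move=> H1 H2; field. by rewrite H1 H2.
Qed.

End Core.


Local Close Scope ring_scope.

Theorem mainTheorem10 (r0 r1 k : nat) (v : nat -> pt) (i j : nat) (n : pt) :
  (r1 <= r0)%coq_nat -> (2 * r0 + 1 <= k)%coq_nat ->
  Defs.nondegenerate v -> (i < 3)%coq_nat -> (j < 3)%coq_nat -> i <> j ->
  unit_normal v i j n ->
  (forall u w : pt -> R,
     inPk v k (Sset i j r0 r1) u -> inPk v k (Sset i j r0 r1) w ->
     (forall beta a b, (beta <= r1)%coq_nat -> (a + b + 2 * (r0 + 1) = k + beta)%coq_nat ->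
        dof v i j n u beta a b = dof v i j n w beta a b) ->
     forall x, u x = w x) /\
  (forall g : nat -> nat -> nat -> R,
     exists u : pt -> R, inPk v k (Sset i j r0 r1) u /\
       forall beta a b, (beta <= r1)%coq_nat -> (a + b + 2 * (r0 + 1) = k + beta)%coq_nat ->
         dof v i j n u beta a b = g beta a b).
Proof.
move=> Hr Hk Hnd Hi Hj Hij Hn.
have Hi' : (i < 3)%N by apply/ltP.
have Hj' : (j < 3)%N by apply/ltP.
have Hr' : (r1 <= r0)%N by apply/leP.
have Hl : (ll i j < 3)%coq_nat /\ ll i j <> i /\ ll i j <> j.
  rewrite /ll; case: i Hi' Hij {Hi Hn} => [|[|[|?]]] // _; case: j Hj' {Hj} => [|[|[|?]]] // _ _ /=; lia.
case: Hl => Hl1 [Hl2 Hl3].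
have Hdl := dl_nonzero v i j (ll i j) n Hnd Hi Hj Hij Hl1 Hl2 Hl3 Hn.
exact: (main_core r0 r1 k v i j n Hi' Hj' Hij Hr' Hdl Hnd).
Qed.
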